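(* Under the hypotheses of Proposition 5 (namely $\alpha_1,\dots,\alpha_K\in\mathbb R^d\setminus\{0\}$, $\eta_1,\dots,\eta_J\in\mathbb R^d$ and $\|\pi(\eta_1)\|>\max_{j\ge2}\|\pi(\eta_j)\|$), one has $(\eta_1-\eta_j)^{T}\pi(\eta_1)>0$ for every $j=2,\dots,J$.
   Context: Canonical projection: for $\eta\ne0$, choose a (possibly empty) subset $\{\alpha_{k_1},\dots,\alpha_{k_m}\}$ of $\{\alpha_1,\dots,\alpha_K\}$, $\mathcal H_\eta$ its span, such that $P_{\mathcal H_\eta}\eta=\sum_p\gamma_{k_p}\alpha_{k_p}$ with all $\gamma_{k_p}\ge0$ and $\alpha_k^{T}P_{\mathcal H_\eta^\perp}\eta<0$ for all $k\notin\{k_1,\dots,k_m\}$; such a subset exists and $\pi(\eta):=P_{\mathcal H_\eta^\perp}\eta$ is uniquely determined and continuous in $\eta$ (set $\pi(0)=0$). $P$ denotes orthogonal projection. *)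

(* Defs.v *)
From HB Require Import structures.
From mathcomp Require Import all_boot all_order all_algebra.
Set Implicit Arguments. Unset Strict Implicit. Unset Printing Implicit Defensive.
Import Order.TTheory GRing.Theory Num.Theory.
Local Open Scope ring_scope.

Definition dotv (R : rcfType) (d : nat) (u v : 'rV[R]_d) : R := (u *m v^T) 0 0.
Definition normv (R : rcfType) (d : nat) (u : 'rV[R]_d) : R := Num.sqrt (dotv u u).

(* [canonical_proj alpha eta p] : p = pi(eta), the canonical projection.
   For eta <> 0: there is a subset S of {1..K} (H := span of alpha_k, k in S)
   with P_H eta = sum_{k in S} gamma_k alpha_k, gamma_k >= 0, and
   alpha_k^T P_{H^perp} eta < 0 for k notin S; p = P_{H^perp} eta.
   P_{H^perp} eta is written out literally: p is orthogonal to every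
   alpha_k (k in S), i.e. p in H^perp, and eta - p = P_H eta lies in H. *)
Definition canonical_proj (R : rcfType) (d K : nat) (alpha : 'I_K -> 'rV[R]_d)
  (eta p : 'rV[R]_d) : Prop :=
  (eta = 0 /\ p = 0) \/
  (eta != 0 /\
   exists (S : {set 'I_K}) (gamma : 'I_K -> R),
     [/\ (forall k, k \in S -> 0 <= gamma k),
         (forall k, k \in S -> dotv (alpha k) p = 0),
         eta - p = \sum_(k in S) gamma k *: alpha k &
         (forall k, k \notin S -> dotv (alpha k) p < 0)]).

(* Main.v *)
Require Import Defs.
From HB Require Import structures.
From mathcomp Require Import lra.
From mathcomp Require Import all_boot all_order all_algebra.
Import Order.TTheory GRing.Theory Num.Theory.
Set Implicit Arguments. Unset Strict Implicit.
Local Open Scope ring_scope.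

Section Dot.
Variables (R : rcfType) (d : nat).
Implicit Types u v w : 'rV[R]_d.

Lemma dotvE u v : dotv u v = \sum_i u 0 i * v 0 i.
Proof. rewrite /dotv !mxE; apply: eq_bigr => i _; by rewrite mxE. Qed.

Lemma dotvC u v : dotv u v = dotv v u.
Proof. rewrite !dotvE; apply: eq_bigr => i _; by rewrite mulrC. Qed.

Lemma dotvDl u v w : dotv (u + v) w = dotv u w + dotv v w.
Proof. rewrite !dotvE -big_split; apply: eq_bigr => i _; by rewrite mxE mulrDl. Qed.

Lemma dotvNl u w : dotv (- u) w = - dotv u w.
Proof. rewrite !dotvE -sumrN; apply: eq_bigr => i _; by rewrite mxE mulNr. Qed.

Lemma dotvBl u v w : dotv (u - v) w = dotv u w - dotv v w.
Proof. by rewrite dotvDl dotvNl. Qed.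

Lemma dotvZl a u w : dotv (a *: u) w = a * dotv u w.
Proof. rewrite !dotvE mulr_sumr; apply: eq_bigr => i _; by rewrite mxE mulrA. Qed.

Lemma dotv0l w : dotv 0 w = 0.
Proof. rewrite dotvE big1 // => i _; by rewrite mxE mul0r. Qed.

Lemma dotv_ge0 u : 0 <= dotv u u.
Proof. rewrite dotvE; apply: sumr_ge0 => i _; exact: mulr_ge0_le0 || exact: sqr_ge0. Qed.

Lemma dotv_suml (I : finType) (S : {set I}) (F : I -> 'rV[R]_d) w :
  dotv (\sum_(k in S) F k) w = \sum_(k in S) dotv (F k) w.
Proof. exact: (big_morph (fun u => dotv u w) (fun u v => dotvDl u v w) (dotv0l w)). Qed.
End Dot.

Lemma cp_nonpos (R : rcfType) (d K : nat) (alpha : 'I_K -> 'rV[R]_d) e q :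
  canonical_proj alpha e q -> forall k, dotv (alpha k) q <= 0.
Proof.
case=> [[_ ->] k|[_ [S [g [_ H0 _ Hn]]]] k].
  by rewrite dotvC dotv0l.
case: (boolP (k \in S)) => kS; first by rewrite H0.
exact: ltW (Hn _ kS).
Qed.

Lemma cp_le (R : rcfType) (d K : nat) (alpha : 'I_K -> 'rV[R]_d) e q w :
  canonical_proj alpha e q -> (forall k, dotv (alpha k) w <= 0) ->
  dotv (e - q) w <= 0.
Proof.
case=> [[-> ->] _|[_ [S [g [Hg _ -> _]]]] Hw].
  by rewrite subr0 dotv0l.
rewrite dotv_suml; apply: sumr_le0 => k kS.
by rewrite dotvZl mulr_ge0_le0 ?Hg.
Qed.

Lemma cp_eq (R : rcfType) (d K : nat) (alpha : 'I_K -> 'rV[R]_d) e q :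
  canonical_proj alpha e q -> dotv (e - q) q = 0.
Proof.
case=> [[-> ->]|[_ [S [g [Hg H0 -> _]]]]].
  by rewrite subr0 dotv0l.
rewrite dotv_suml big1 // => k kS.
by rewrite dotvZl H0 // mulr0.
Qed.

Theorem corollary2 (R : rcfType) (d K J : nat)
  (alpha : 'I_K -> 'rV[R]_d) (eta p : 'I_J.+1 -> 'rV[R]_d) :
  (forall k, alpha k != 0) ->
  (forall j, canonical_proj alpha (eta j) (p j)) ->
  (forall j : 'I_J.+1, j != ord0 -> normv (p j) < normv (p ord0)) ->
  forall j : 'I_J.+1, j != ord0 -> 0 < dotv (eta ord0 - eta j) (p ord0).
Proof.
move=> _ Hcp Hn j j0.
set q := p ord0; set q' := p j.
have H1 := cp_eq (Hcp ord0).
have H2 := cp_le (Hcp j) (cp_nonpos (Hcp ord0)).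
have Hlt : dotv q' q' < dotv q q.
  have := Hn j j0; rewrite /normv.
  have [qp|] := ltrP 0 (dotv q q); first by rewrite ltr_sqrt.
  move=> qle; rewrite (ler0_sqrtr qle) => h.
  by have := le_lt_trans (sqrtr_ge0 _) h; rewrite ltxx.
have Hsq := dotv_ge0 (q - q').
rewrite dotvBl (dotvC q) (dotvC q') !dotvBl (dotvC q q') in Hsq.
have E0 : dotv (eta ord0) q = dotv (eta ord0 - q) q + dotv q q by rewrite dotvBl subrK.
have Ej : dotv (eta j) q = dotv (eta j - q') q + dotv q' q by rewrite dotvBl subrK.
rewrite dotvBl E0 Ej H1.
rewrite /q /q' in Hsq Hlt H2 *.
move: Hsq Hlt H2; rewrite add0r.
move: (dotv (p ord0) (p ord0)) (dotv (p j) (p ord0)) (dotv (p j) (p j)) (dotv (eta j - p j) (p ord0)) => a b c e.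
move=> *; lra.
Qed.
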